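(* For any deterministic eviction heuristic $h$ and any $N$ and memory budget $B \le N$, there exists an $N$-node network (computation graph) on which DTR using heuristic $h$ with budget $B$ requires $\Omega(N/B)$ times more tensor computations than an optimal static checkpointing algorithm with the same budget.
   Context: A network is a directed acyclic computation graph whose nodes are tensors; each tensor is either a constant or produced by a pure operator applied to its parent tensors. Every tensor occupies one unit of memory and every operator application costs one unit (one tensor computation). DTR (Dynamic Tensor Rematerialization) with memory budget $B$ is an online algorithm: the network's operations are presented one at a time in a given order, and DTR must perform each one when presented, without knowledge of future operations. To perform an operation, its inputs must be resident; evicted inputs are rematerialized by recursively re-executing their producing operations. When memory is full, DTR evicts the resident (evictable) tensor chosen by the heuristic; a deterministic heuristic's choice depends only on the portion of the graph revealed so far and the execution history. Tensors with no producing operation (e.g. the input) can never be evicted. A static checkpointing algorithm sees the whole graph in advance and may compute the tensors in any order consistent with dependencies, choosing which tensors to keep or recompute, subject to the same memory budget $B$; both must compute every tensor of the network. The cost of an algorithm is its total number of tensor computations, including rematerializations. *)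

(* Defs.v *)
From HB Require Import structures.
From mathcomp Require Import all_boot.
Set Implicit Arguments. Unset Strict Implicit. Unset Printing Implicit Defensive.

(* Node i is
   - [None]      : a constant tensor (no producing operation), or
   - [Some ps]   : produced by a pure operator applied to the parent tensors ps.
   Nodes are indexed in the order in which they are presented to DTR;
   well-formedness requires parents to come earlier (so the graph is a DAG
   and the presentation order is consistent with dependencies). *)
Definition net := seq (option (seq nat)).

Definition wf_net (G : net) : Prop :=
  forall i ps, i < size G -> nth None G i = Some ps -> all (fun p => p < i) ps.

Definition parents (G : net) (v : nat) : seq nat := odflt [::] (nth None G v).
Definition is_const (G : net) (v : nat) : bool := nth None G v == None.

Inductive event := EComp of nat | EEvict of nat.
Definition event_to (e : event) : nat + nat :=
  match e with EComp v => inl v | EEvict v => inr v end.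
Definition event_of (x : nat + nat) : event :=
  match x with inl v => EComp v | inr v => EEvict v end.
Lemma event_toK : cancel event_to event_of. Proof. by case. Qed.
HB.instance Definition _ := Equality.copy event (can_type event_toK).

(* A deterministic eviction heuristic: its choice is a function of the revealed
   portion of the network (the presented prefix), the execution history so far,
   and the list of currently evictable resident tensors (itself determined by
   the former two). An out-of-range answer is replaced by the first candidate. *)
Definition heuristic := net -> seq event -> seq nat -> nat.

Record dstate := DState { res : seq nat; hist : seq event; cost : nat }.

Section DTR.
Variables (h : heuristic) (G : net) (B : nat).

Definition choose (rev : net) (hs : seq event) (cands : seq nat) : nat :=
  let c := h rev hs cands in if c \in cands then c else head 0 cands.

Fixpoint make_room (fuel : nat) (rev : net) (locked : seq nat) (st : dstate)
  : option dstate :=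
  if size (res st) < B then Some st else
  match fuel with
  | 0 => None
  | f.+1 =>
    let cands := [seq x <- res st | ~~ is_const G x & x \notin locked] in
    if cands is [::] then None else
    let v := choose rev (hist st) cands in
    make_room f rev locked
      (DState (rem v (res st)) (rcons (hist st) (EEvict v)) (cost st))
  end.

Definition alloc rev locked st := make_room (size (res st)) rev locked st.

(* Ensure tensor v is resident, recursively (re)materialising evicted inputs.
   The inputs of all pending operations on the recursion stack are locked. *)
Fixpoint ensure (fuel : nat) (rev : net) (locked : seq nat) (v : nat) (st : dstate)
  : option dstate :=
  match fuel with
  | 0 => None
  | f.+1 =>
    if v \in res st then Some st else
    match nth None G v with
    | None => None
    | Some ps =>
      let L := ps ++ locked in
      let st1 := foldl (fun acc p => obind (ensure f rev L p) acc) (Some st) ps in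
      obind (fun st2 =>
        obind (fun st3 =>
          Some (DState (v :: res st3) (rcons (hist st3) (EComp v)) (cost st3).+1))
          (alloc rev L st2)) st1
    end
  end.

Definition present (i : nat) (st : dstate) : option dstate :=
  let rev := take i.+1 G in
  match nth None G i with
  | None => obind (fun st' =>
              Some (DState (i :: res st') (rcons (hist st') (EComp i)) (cost st')))
              (alloc rev [::] st)
  | Some _ => ensure (size G).+1 rev [::] i st
  end.

Definition dtr_run : option dstate :=
  foldl (fun acc i => obind (present i) acc) (Some (DState [::] [::] 0)) (iota 0 (size G)).

(* total number of tensor computations (operator applications, including
   rematerialisations) performed by DTR; None if DTR gets stuck *)
Definition dtr_cost : option nat := omap cost dtr_run.

End DTR.

(* Static checkpointing: a schedule is a sequence of compute/free events,
   chosen with full knowledge of the graph. *)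
Fixpoint static_ok (G : net) (B : nat) (r : seq nat) (s : seq event) : bool :=
  match s with
  | [::] => true
  | EComp v :: s' =>
      [&& v < size G, all (fun p => p \in r) (parents G v),
          size (undup (v :: r)) <= B & static_ok G B (undup (v :: r)) s']
  | EEvict v :: s' =>
      [&& v \in r, ~~ is_const G v & static_ok G B (rem v r) s']
  end.

Definition static_valid (B : nat) (G : net) (s : seq event) : Prop :=
  static_ok G B [::] s /\ forall v, v < size G -> EComp v \in s.

Definition static_cost (G : net) (s : seq event) : nat :=
  count (fun e => if e is EComp v then ~~ is_const G v else false) s.

(* Main.v *)
Require Import Defs.
From mathcomp Require Import all_boot.
From mathcomp Require Import zify.
Set Implicit Arguments. Unset Strict Implicit. Unset Printing Implicit Defensive.


Definition nice (G : net) : Prop :=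
  forall i, i < size G -> exists2 ps, nth None G i = Some ps &
     (ps = [::] \/ exists2 p, ps = [:: p] & p < i).

Fixpoint depth (G : net) (f : nat) (r : seq nat) (v : nat) : nat :=
  match f with
  | 0 => 0
  | f'.+1 => if v \in r then 0 else
      match nth None G v with Some (p :: _) => (depth G f' r p).+1 | _ => 1 end
  end.

Section Run.
Variables (h : heuristic) (G : net) (B : nat).
Hypothesis (nG : nice G) (B2 : 2 <= B).

Lemma nonconst x : x < size G -> ~~ is_const G x.
Proof. move=> /nG [ps E _]; by rewrite /is_const E. Qed.

Lemma make_room_ok fuel rev L p st :
  uniq (res st) -> all (fun x => x < size G) (res st) -> size (res st) < fuel + B ->
  (forall x, x \in L -> x \in res st -> x = p) ->
  exists st', make_room h G B fuel rev L st = Some st' /\ uniq (res st') /\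
    {subset res st' <= res st} /\ size (res st') < B /\ cost st' = cost st.
Proof.
elim: fuel st => [|f IH] [r hs c] /= ur ar sz lk.
  by rewrite add0n in sz; exists (DState r hs c); rewrite sz; repeat split => //.
case: ltnP => hlt; first by exists (DState r hs c); repeat split => //.
have [x xin xp] : exists2 x, x \in r & x != p.
  move: ur hlt; case: r {ar sz lk} => [|a [|b r']] //=; first by move=> _; lia.
    by move=> _; lia.
  rewrite !inE negb_or => /andP [/andP [ab _] _] _.
  case: (eqVneq a p) => [ap|ap]; last by exists a; rewrite ?inE ?eqxx.
  by exists b; rewrite ?inE ?eqxx ?orbT // -ap eq_sym.
have xc : x \in [seq x <- r | ~~ is_const G x & x \notin L].
  rewrite mem_filter xin andbT nonconst; last by move/allP: ar => /(_ x xin).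
  by apply/negP => /lk /(_ xin) xe; move: xp; rewrite xe eqxx.
case E: [seq x <- r | ~~ is_const G x & x \notin L] xc => [|c0 cs] // _.
set v := Defs.choose h _ _ _.
have vin : v \in c0 :: cs by rewrite /v /Defs.choose; case: ifP => //; rewrite ?inE ?eqxx.
move: vin; rewrite -E mem_filter => /andP [/andP [_ vL] vr].
have szr : size (rem v r) < f + B.
  rewrite size_rem //; change ((@size nat r).-1 < f + B); move: sz B2; clear; lia.
have [st' [-> [u' [s' [z' c']]]]] := IH (DState (rem v r) (rcons hs (EEvict v)) c)
  (rem_uniq _ ur) (introT allP (fun y yin => (allP ar) y (mem_rem yin)))
  szr
  (fun y yL yr => lk y yL (mem_rem yr)).
exists st'; split=> //; split=> //; split; last by [].
by move=> y /s' /mem_rem.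
Qed.

Lemma ensure_ok f rev Lk v st :
  v < f -> v < size G -> uniq (res st) -> all (fun x => x < size G) (res st) ->
  size (res st) <= B ->
  (forall x, x \in Lk -> v <= x /\ (x \in res st -> x = v)) ->
  exists st', ensure h G B f rev Lk v st = Some st' /\ uniq (res st') /\
    all (fun x => x < size G) (res st') /\ size (res st') <= B /\ v \in res st' /\
    (forall x, x \in res st' -> x \in res st \/ x <= v) /\
    cost st + depth G f (res st) v <= cost st'.
Proof.
elim: f v st Lk => [|f IH] v st Lk //= vf vG ur ar sz lk.
case: ifP => vin.
  exists st; split=> //; do 4 (split => //); split; last by rewrite addn0.
  by move=> x xi; left.
have [ps Eps hps] := nG vG; rewrite Eps.
have lkv : forall x, x \in Lk -> x \in res st -> False.
  by move=> x xL xr; have [_ H] := lk x xL; move: vin; rewrite -(H xr) xr.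
have vS : 0 < B by lia.
case: hps => [->|[p -> pv]]; rewrite /alloc /=.
- have sz3 : size (res st) < size (res st) + B by lia.
  have [st3 [-> [u3 [s3 [z3 c3]]]]] :=
    make_room_ok (p:=v) rev ur ar sz3
      (fun x xL xr => match lkv x xL xr with end).
  eexists; split; first reflexivity.
  have v3 : v \notin res st3 by apply/negP => /s3; rewrite vin.
  split; first by rewrite /= v3.
  split; first by rewrite /= vG; apply/allP => x /s3 /(allP ar).
  split; first by rewrite /=; lia.
  split; first by rewrite inE eqxx.
  split; first by move=> x; rewrite inE => /orP [/eqP ->|/s3]; [right|left].
  by rewrite /= c3 addn1.
- have pf : p < f by lia.
  have pG : p < size G by lia.
  have lk2 : forall x, x \in p :: Lk -> p <= x /\ (x \in res st -> x = p).
    move=> x; rewrite inE => /orP [/eqP ->|xL]; first by [].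
    have [vx _] := lk x xL; split; first by lia.
    by move=> xr; case: (lkv x xL xr).
  have [st2 [-> [u2 [a2 [z2 [p2 [s2 c2]]]]]]] := IH p st (p :: Lk) pf pG ur ar sz lk2.
  have lk3 : forall x, x \in p :: Lk -> x \in res st2 -> x = p.
    move=> x; rewrite inE => /orP [/eqP ->|xL] // xr.
    have [vx _] := lk x xL.
    case: (s2 x xr) => [xr0|xp]; first by case: (lkv x xL xr0).
    lia.
  have sz3 : size (res st2) < size (res st2) + B by lia.
  rewrite /= /alloc. have [st3 [-> [u3 [s3 [z3 c3]]]]] :=
    make_room_ok rev u2 a2 sz3 lk3.
  eexists; split; first reflexivity.
  have v3 : v \notin res st3.
    apply/negP => /s3 /s2 [] ; first by rewrite vin.
    lia.
  split; first by rewrite /= v3.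
  split; first by rewrite /= vG; apply/allP => x /s3 /(allP a2).
  split; first by rewrite /=; lia.
  split; first by rewrite inE eqxx.
  split.
    move=> x; rewrite inE => /orP [/eqP ->|/s3 /s2 []]; [right|left|right] => //.
    lia.
  rewrite /= c3; lia.
Qed.

Lemma present_ok i st :
  i < size G -> uniq (res st) -> all (fun x => x < i) (res st) -> size (res st) <= B ->
  exists st', present h G B i st = Some st' /\ uniq (res st') /\
    all (fun x => x < i.+1) (res st') /\ size (res st') <= B /\
    cost st + depth G (size G).+1 (res st) i <= cost st'.
Proof.
move=> iG ur ar sz.
have [ps Eps _] := nG iG.
have ar' : all (fun x => x < size G) (res st).
  by apply/allP => x /(allP ar) xi; lia.
have lk : forall x, x \in [::] -> i <= x /\ (x \in res st -> x = i) by [].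
have iS : i < (size G).+1 by lia.
have [st' [E [u' [a' [z' [_ [s' c']]]]]]] := ensure_ok (take i.+1 G) iS iG ur ar' sz lk.
exists st'; rewrite /present Eps E; split => //; split => //; split; last by [].
apply/allP => x /s' [/(allP ar) xi|xi]; lia.
Qed.
End Run.

Definition run h G B q :=
  foldl (fun acc i => obind (present h G B i) acc) (Some (DState [::] [::] 0)) (iota 0 q).

Lemma runS h G B q : run h G B q.+1 = obind (present h G B q) (run h G B q).
Proof. by rewrite /run -addn1 iotaD foldl_cat. Qed.

Lemma dtr_costE h G B : dtr_cost h G B = omap cost (run h G B (size G)).
Proof. by []. Qed.

Lemma is_constE G x : nice G -> is_const G x = (size G <= x).
Proof.
move=> nG; case: (ltnP x (size G)) => xs.
  by apply/negbTE/nonconst.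
by rewrite /is_const nth_default.
Qed.

Section Congr.
Variables (h : heuristic) (G1 G2 : net) (B q : nat).
Hypotheses (n1 : nice G1) (n2 : nice G2) (sz : size G1 = size G2)
  (ag : forall i, i < q -> nth None G1 i = nth None G2 i).

Lemma mr_congr fuel rev L st :
  make_room h G1 B fuel rev L st = make_room h G2 B fuel rev L st.
Proof.
elim: fuel st => [|f IH] st //=.
have -> : [seq x <- res st | ~~ is_const G1 x & x \notin L] =
          [seq x <- res st | ~~ is_const G2 x & x \notin L].
  by apply: eq_filter => x; rewrite !is_constE // sz.
case: ifP => // _; case: [seq _ <- _ | _] => // c cs.
Qed.

Lemma ens_congr f rev Lk v st : v < q ->
  ensure h G1 B f rev Lk v st = ensure h G2 B f rev Lk v st.
Proof.
elim: f v st Lk => [|f IH] v st Lk //= vq.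
case: ifP => // _.
rewrite ag //.
case E: (nth None G2 v) => [ps|] //.
have vs : v < size G1.
  by rewrite sz; case: ltnP => // vs; move: E; rewrite nth_default.
have [ps' E' hps] := n1 vs; move: E' hps; rewrite ag // E => -[<-] hps.
case: hps => [->|[p -> pv]] /=; first by rewrite /alloc mr_congr.
rewrite IH; last by lia.
case: ensure => //= st2; by rewrite /alloc mr_congr.
Qed.

Lemma present_congr i st : i < q ->
  present h G1 B i st = present h G2 B i st.
Proof.
move=> iq; rewrite /present.
have -> : take i.+1 G1 = take i.+1 G2.
  apply: (@eq_from_nth _ None); first by rewrite !size_take sz.
  move=> j; rewrite size_take_min => jl; rewrite !nth_take ?ag //; lia.
rewrite ag // sz.
case: (nth None G2 i) => [ps|]; last by rewrite /alloc mr_congr.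
by apply: ens_congr.
Qed.

Lemma run_congr q' : q' <= q -> run h G1 B q' = run h G2 B q'.
Proof.
elim: q' => [|q' IH] qq //.
rewrite !runS IH; last by lia.
case: run => //= st; apply: present_congr; lia.
Qed.
End Congr.



Section Cons.
Variables (h : heuristic) (N B : nat).
Hypotheses (B2 : 2 <= B) (BN : B <= N).

Definition L := N %/ 2.
Definition sb := L %/ B.+1.

Lemma L1 : 0 < L. Proof. rewrite /L; lia. Qed.
Lemma LN : L < N. Proof. rewrite /L; lia. Qed.

Definition chent (j : nat) : option (seq nat) :=
  if j < L then (if j is j'.+1 then Some [:: j'] else Some [::]) else Some [::].

Definition base : net := mkseq chent N.

Definition blockfree (r : seq nat) (k : nat) :=
  ~~ has (fun x => (k * sb <= x) && (x < k.+1 * sb)) r.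

Definition adv (r : seq nat) : nat :=
  minn L.-1 (if sb is 0 then 0 else (find (blockfree r) (iota 0 B.+1)).+1 * sb - 1).

Fixpoint Gt (t : nat) : net :=
  if t is t'.+1 then
    set_nth None (Gt t') (L + t')
      (Some [:: adv (odflt [::] (omap res (run h (Gt t') B (L + t'))))])
  else base.

Lemma size_Gt t : t <= N - L -> size (Gt t) = N.
Proof.
elim: t => [|t IH] tl /=; first by rewrite size_mkseq.
rewrite size_set_nth IH; last by lia.
have := LN; lia.
Qed.

Lemma Gt_agree t t' i : t <= t' -> i < L + t -> nth None (Gt t') i = nth None (Gt t) i.
Proof.
elim: t' => [|t' IH] tt il; first by have -> : t = 0 by lia.
case: (eqVneq t t'.+1) => [->//|ne].
have ne' : i != L + t' by apply/eqP; lia.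
rewrite /= nth_set_nth /= (negbTE ne').
apply: IH; lia.
Qed.

Lemma Gt_chain t i : i < L -> nth None (Gt t) i = chent i.
Proof.
move=> iL; rewrite (@Gt_agree 0 t) //; last by lia.
by rewrite /= nth_mkseq //; have := LN; lia.
Qed.

Lemma Gt_rest t i : L + t <= i -> i < N -> nth None (Gt t) i = Some [::].
Proof.
elim: t => [|t IH] ti iN /=.
  by rewrite nth_mkseq // /chent ifF //; apply/negbTE; rewrite -leqNgt; lia.
have ne' : i != L + t by apply/eqP; lia.
rewrite nth_set_nth /= (negbTE ne').
apply: IH => //; lia.
Qed.

Lemma Gt_query t t' : t < t' ->
  nth None (Gt t') (L + t) = Some [:: adv (odflt [::] (omap res (run h (Gt t) B (L + t))))].
Proof.
move=> tt; rewrite (@Gt_agree t.+1 t') //; last by lia.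
by rewrite /= nth_set_nth /= eqxx.
Qed.

Lemma adv_lt r : adv r < L.
Proof. have := L1; rewrite /adv; lia. Qed.

Lemma nice_Gt t : t <= N - L -> nice (Gt t).
Proof.
move=> tl i; rewrite size_Gt // => iN.
case: (ltnP i L) => iL.
  rewrite Gt_chain // /chent iL; case: i iL iN => [|i] iL iN.
    by eexists; first reflexivity; left.
  by eexists; first reflexivity; right; exists i.
case: (ltnP i (L + t)) => it.
  have -> : i = L + (i - L) by lia.
  rewrite Gt_query; last by lia.
  eexists; first reflexivity; right; eexists; first reflexivity.
  have := adv_lt (odflt [::] (omap res (run h (Gt (i - L)) B (L + (i - L))))); lia.
by rewrite Gt_rest //; eexists; first reflexivity; left.
Qed.

Definition Gf := Gt (N - L).

Lemma size_Gf : size Gf = N. Proof. exact: size_Gt. Qed.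
Lemma nice_Gf : nice Gf. Proof. exact: nice_Gt. Qed.


Lemma sbL : B.+1 * sb <= L.
Proof. rewrite mulnC; exact: leq_trunc_div. Qed.

Lemma adv_ok r : size r <= B -> 0 < sb ->
  sb <= (adv r).+1 /\ forall x, (adv r).+1 - sb <= x -> x <= adv r -> x \notin r.
Proof.
move=> szr sbp.
have hP : has (blockfree r) (iota 0 B.+1).
  apply/negP => nh0.
  have nh : forall k, k \in iota 0 B.+1 -> ~~ blockfree r k.
    by move=> k kin; apply/negP => bk; apply: nh0; apply/hasP; exists k.
  have sub : {subset iota 0 B.+1 <= map (fun x => x %/ sb) r}.
    move=> k kin; move: (nh k kin); rewrite /blockfree negbK => /hasP [x xr /andP [lo hi]].
    apply/mapP; exists x => //; apply/eqP; rewrite eq_sym eqn_leq leq_divRL // lo andbT -ltnS ltn_divLR //.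
  have := uniq_leq_size (iota_uniq 0 B.+1) sub; rewrite size_iota size_map; lia.
set k := find (blockfree r) (iota 0 B.+1).
have kB : k < B.+1 by move: hP; rewrite has_find size_iota.
have bk : blockfree r k.
  by have := nth_find 0 hP; rewrite nth_iota // add0n.
have Ea : adv r = minn L.-1 (k.+1 * sb - 1).
  by rewrite /adv /k; case: sb sbp.
have kL : k.+1 * sb <= L.
  apply: leq_trans sbL; by rewrite leq_mul2r kB orbT.
move: Ea kL bk; rewrite mulSn => Ea kL bk.
have Ea' : adv r = k * sb + sb - 1.
  rewrite Ea; have := L1; lia.
rewrite Ea'; split; first lia.
move=> x lo hi; apply/negP => xr; move/negP: bk; apply.
apply/hasP; exists x => //; rewrite mulSn; apply/andP; split; lia.
Qed.

Lemma depth_chain t s' : forall j f r, j < L -> s' <= j.+1 -> j < f ->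
  (forall x, j.+1 - s' <= x -> x <= j -> x \notin r) -> s' <= depth (Gt t) f r j.
Proof.
elim: s' => [|s' IH] j [|f] r //= jL sj jf fr.
have jr : (j \in r) = false.
  by apply/negbTE; apply: fr; lia.
rewrite jr Gt_chain // /chent jL.
case: j jL sj jf fr {jr} => [|j] jL sj jf fr /=; first by lia.
rewrite ltnS; apply: IH; try lia.
move=> x lo hi; apply: fr; lia.
Qed.

Lemma run_ok q : q <= N -> exists st, run h Gf B q = Some st /\ uniq (res st) /\
  all (fun x => x < q) (res st) /\ size (res st) <= B /\ q <= cost st /\
  (q - L) * sb <= cost st.
Proof.
elim: q => [|q IH] qN.
  exists {| res := [::]; hist := [::]; cost := 0 |}; rewrite sub0n; repeat split.
have [st [E [u [a [z [c1 c2]]]]]] := IH (ltnW qN).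
have qG : q < size Gf by rewrite size_Gf.
have [st' [E' [u' [a' [z' c']]]]] := present_ok h nice_Gf B2 qG u a z.
exists st'; rewrite runS E /= E'; split => //; do 3 (split => //).
have qr : (q \in res st) = false.
  by apply/negbTE/negP => /(allP a); rewrite ltnn.
move: c'; rewrite /= qr => c'.
have D1 : 1 <= match nth None Gf q with Some (p :: _) => (depth Gf (size Gf) (res st) p).+1 | _ => 1 end.
  by case: (nth None Gf q) => [[|p ps]|].
split; first by lia.
case: (ltnP q L) => qL.
  have -> : q.+1 - L = 0 by lia.
  by rewrite mul0n.
have [sb0|sbp] := posnP sb.
  by rewrite sb0 muln0.
have Eq : nth None Gf q = Some [:: adv (res st)].
  have -> : q = L + (q - L) by lia.
  rewrite /Gf Gt_query; last by lia.
  have n1 : nice (Gt (q - L)) by apply: nice_Gt; lia.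
  have sz : size (Gt (q - L)) = size Gf by rewrite size_Gf size_Gt //; lia.
  have ag : forall i, i < L + (q - L) -> nth None (Gt (q - L)) i = nth None Gf i.
    by move=> i il; rewrite /Gf (@Gt_agree (q - L)) //; lia.
  rewrite (run_congr h B n1 nice_Gf sz ag (leqnn _)).
  have e : L + (q - L) = q by lia.
  by rewrite e E.
move: c' D1; rewrite Eq => c' _.
have [ss fr] := adv_ok z sbp.
have := @depth_chain (N - L) sb (adv (res st)) (size Gf) (res st) (adv_lt _) ss.
rewrite size_Gf => /(_ (leq_trans (adv_lt _) (ltnW LN)) fr) dc.
have dc' : sb <= depth Gf N (res st) (adv (res st)) := dc.
rewrite size_Gf in c'.
have -> : q.+1 - L = (q - L) + 1 by lia.
rewrite mulnDl mul1n; lia.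
Qed.

End Cons.


Lemma arith N B L sb d sc : 2 <= B -> 2 * L <= N -> N <= 2 * L + 1 ->
  L < (sb + 1) * (B + 1) -> sc <= N -> N <= d -> (N - L) * sb <= d ->
  N * sc <= 16 * B * d.
Proof.
move=> B2 L1 L2 Ls scN Nd Ld.
have h0 : N * sc <= N * N by apply: leq_mul.
apply: (leq_trans h0).
case: (leqP N (8 * B)) => NB.
  have : N * N <= 8 * B * N by apply: leq_mul.
  have : 8 * B * N <= 8 * B * d by apply: leq_mul.
  lia.
have sb1 : 1 <= sb.
  case: sb Ls Ld => // Ls; nia.
have h1 : N <= 8 * B * sb by nia.
have h2 : N * sb <= 2 * d by nia.
nia.
Qed.

Lemma sum_count (js qs : seq nat) (g : nat -> nat) : uniq js ->
  (forall q, q \in qs -> g q \in js) ->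
  \sum_(j <- js) count (fun q => g q == j) qs = size qs.
Proof.
move=> uj; elim: qs => [|q qs IH] hq /=; first by rewrite big1.
rewrite big_split /= IH; last by move=> x xi; apply: hq; rewrite inE xi orbT.
have -> : \sum_(j <- js) (g q == j) = \sum_(j <- js | g q == j) 1.
  by rewrite [RHS]big_mkcond /=; apply: eq_bigr => j _; case: eqP.
rewrite sum1_count.
have -> : count (fun j => g q == j) js = count_mem (g q) js.
  by apply: eq_count => j; rewrite eq_sym.
by rewrite count_uniq_mem // hq // inE eqxx.
Qed.

Definition isComp (e : event) : bool := if e is EComp _ then true else false.

Lemma count_pairs (l : seq nat) :
  count isComp (flatten [seq [:: EComp q; EEvict q] | q <- l]) = size l.
Proof. by elim: l => //= q l ->. Qed.

Section Static.
Variables (h : heuristic) (N B : nat).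
Hypotheses (B2 : 2 <= B) (BN : B <= N).

Local Notation G := (Gf h N B).
Local Notation LL := (L N).
Definition qp q := head 0 (parents G q).

Lemma nG : nice G. Proof. exact: (nice_Gf B2 BN). Qed.
Lemma sG : size G = N. Proof. exact: (size_Gf h B2 BN). Qed.

Lemma par_chain j : j < LL -> parents G j = if j is j'.+1 then [:: j'] else [::].
Proof.
move=> jL; rewrite /parents /Gf (Gt_chain h B2 BN) // /chent jL.
by case: j jL.
Qed.

Lemma par_query q : LL <= q -> q < N -> parents G q = [:: qp q] /\ qp q < LL.
Proof.
move=> Lq qN.
have E : nth None G q = Some [:: adv N B (odflt [::] (omap res (run h (Gt h N B (q - LL)) B (L N + (q - LL)))))].
  have qt : q = L N + (q - LL) by move: Lq; clear; lia.
  have tl : q - LL < N - L N by move: Lq qN; clear; lia.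
  by rewrite {1}qt /Gf (Gt_query h B2 BN tl).
rewrite /qp /parents E /=; split => //; exact: (adv_lt B2 BN).
Qed.

Lemma nonc v : v < N -> is_const G v = false.
Proof. by move=> vN; apply/negbTE/(nonconst nG); rewrite sG. Qed.

Definition qlist j := [seq q <- iota LL (N - LL) | qp q == j].

Definition blk j := EComp j :: ((if j is j'.+1 then [:: EEvict j'] else [::]) ++
   flatten [seq [:: EComp q; EEvict q] | q <- qlist j]).

Definition sched := flatten [seq blk j | j <- iota 0 LL].

Lemma q_ok j qs rest : j < LL -> all (fun q => (LL <= q < N) && (qp q == j)) qs ->
  static_ok G B [:: j] (flatten [seq [:: EComp q; EEvict q] | q <- qs] ++ rest) =
  static_ok G B [:: j] rest.
Proof.
move=> jL; elim: qs => [|q qs IH] //= /andP [/andP [/andP [Lq qN] /eqP qj] aq].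
have [pq _] := par_query Lq qN.
have qj' : (q == j) = false by apply/negbTE/eqP; lia.
rewrite sG qN pq qj /= !inE qj' eqxx /= B2 nonc //= eqxx.
by rewrite inE eqxx IH.
Qed.

Lemma chain_ok n j : j + n = LL ->
  static_ok G B (if j is j'.+1 then [:: j'] else [::]) (flatten [seq blk i | i <- iota j n]).
Proof.
elim: n j => [|n IH] j jn //=.
have jL : j < LL by lia.
have aq : all (fun q => (LL <= q < N) && (qp q == j)) (qlist j).
  apply/allP => q; rewrite mem_filter mem_iota => /andP [qj /andP [lo hi]].
  rewrite qj lo andbT /=; move: hi (LN B2 BN); clear; lia.
rewrite /blk -catA.
case: j jL jn IH aq => [|j] jL jn IH aq /=.
  rewrite sG (leq_trans jL (ltnW (LN B2 BN))) par_chain //=.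
  have -> : 1 <= B by lia.
  rewrite /= q_ok //; apply: (IH 1); lia.
rewrite sG (leq_trans jL (ltnW (LN B2 BN))) par_chain //= inE eqxx /=.
have jj : (j.+1 == j) = false by apply/negbTE/eqP; lia.
rewrite inE jj /= inE eqxx /= nonc; last by have := LN B2 BN; lia.
have -> : 2 <= B by [].
rewrite inE eqxx orbT jj /= q_ok //; apply: (IH j.+2); lia.
Qed.

Lemma sched_ok : static_ok G B [::] sched.
Proof. exact: (@chain_ok LL 0). Qed.

Lemma sched_cover v : v < size G -> EComp v \in sched.
Proof.
rewrite sG => vN; apply/flatten_mapP.
case: (ltnP v LL) => vL.
  by exists v; rewrite ?mem_iota ?inE ?eqxx //=; lia.
have [_ qL] := par_query vL vN.
exists (qp v); first by rewrite mem_iota; lia.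
rewrite /blk inE mem_cat; apply/orP; right; apply/orP; right.
apply/flatten_mapP; exists v; last by rewrite inE eqxx.
by rewrite mem_filter eqxx mem_iota /=; lia.
Qed.

Lemma sched_cost : static_cost G sched <= N.
Proof.
apply: (@leq_trans (count isComp sched)).
  by apply: sub_count => -[].
rewrite /sched count_flatten -map_comp sumnE big_map.
under eq_bigr => j _ do rewrite /= count_cat count_pairs size_filter.
rewrite big_split /= big_split /=.
have H : forall q, q \in iota LL (N - LL) -> qp q \in iota 0 LL.
  move=> q; rewrite mem_iota => /andP [Lq qN].
  have qN' : q < N by move: qN (LN B2 BN); clear; lia.
  have [_ ql] := par_query Lq qN'.
  by rewrite mem_iota.
rewrite (sum_count (iota_uniq 0 LL) H).
rewrite sum1_size big1; last by move=> [|i].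
rewrite !size_iota.
by move: (LN B2 BN); clear; lia.
Qed.

End Static.

Theorem theorem2 :
  exists k B0 : nat, 0 < k /\
  forall (h : heuristic) (N B : nat), B0 <= B -> B <= N ->
  exists G : net, size G = N /\ wf_net G /\
    exists (d : nat) (s : seq event),
      dtr_cost h G B = Some d /\ static_valid B G s /\
      N * static_cost G s <= k * B * d.
Proof.
exists 16, 2; split => // h N B B2 BN.
exists (Gf h N B); split; first exact: (size_Gf h B2 BN).
split.
  move=> i ps iG E.
  have [ps' E' hps] := nice_Gf (h := h) B2 BN iG.
  move: E' hps; rewrite E => -[<-] [->|[p -> pi]] //=.
  by rewrite pi.
have [st [E [_ [_ [_ [c1 c2]]]]]] := run_ok h B2 BN (leqnn N).
exists (cost st), (sched h N B).
split; first by rewrite dtr_costE (size_Gf h B2 BN) E.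
split; first by split; [exact: (sched_ok h B2 BN) | exact: (sched_cover B2 BN)].
have l1 : 2 * L N <= N by rewrite /L; lia.
have l2 : N <= 2 * L N + 1 by rewrite /L; lia.
have l3 : L N < (sb N B + 1) * (B + 1).
  by rewrite !addn1 /sb; apply: ltn_ceil.
exact: (arith B2 l1 l2 l3 (sched_cost h B2 BN) c1 c2).
Qed.
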